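(* Let $S=(G,-1,q)$ and $S'=(G',-1',q')$ be quaternionic structures. Then (a) $B(S\times S')\cong B(S)\times B(S')$, and (b) $B(S\Delta)\cong B(S)\times G$ as groups.
   Context: A quaternionic structure is a triple $S=(G,-1,q)$ where $G$ is a multiplicative group in which every element is its own inverse, $-1\in G$ is a distinguished element (possibly $-1=1$), $-a:=(-1)a$, and $q:G\times G\to Q$ is a surjective map onto a set $Q$ with distinguished element $0$, such that for all $a,b,c,d\in G$: (Q1) $q(a,-a)=0$; (Q2) $q(a,b)=q(b,a)$; (Q3) $q(a,b)=q(a,c)\iff q(a,bc)=0$; (Q4) $q(a,b)=q(c,d)\iff$ there is $x\in G$ with $q(a,b)=q(a,x)=q(c,x)=q(c,d)$. The abstract 2-Brauer group $B(S)$ is the abelian group, with operation $\ast$, generated by $Q$ subject only to the relations $q(a,b)\ast q(a,c)=q(a,bc)$ for all $a,b,c\in G$. Direct product: for $S_i=(G_i,e_i,q_i)$, $S_1\times S_2=(G_1\times G_2,(e_1,e_2),q_1\times q_2)$ with $(q_1\times q_2)((a_1,a_2),(b_1,b_2))=(q_1(a_1,b_1),q_2(a_2,b_2))$, quaternion set $Q_1\times Q_2$ and zero $(0,0)$. Group extension: $S\Delta=S[x]=(G\times\{1,x\},-1,q_x)$ where $\{1,x\}$ is cyclic of order $2$ (inner direct product notation) and $q_x(ax^\alpha,bx^\beta)=(q(a,b),(-1)^{\alpha\beta}a^\beta b^\alpha)\in Q\times G$ for $a,b\in G$, $\alpha,\beta\in\{0,1\}$, with zero quaternion $(0,1)$ and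 quaternion set the image of $q_x$. Both constructions yield quaternionic structures. *)

(* Defs.v *)
From Stdlib Require Import List Bool.
Import ListNotations.
Set Implicit Arguments.

Record qdata := QData {
  G : Type;
  gmul : G -> G -> G;
  gone : G;
  gm1 : G;
  Q : Type;
  qzero : Q;
  qq : G -> G -> Q
}.

Definition gneg (S : qdata) (a : G S) : G S := gmul S (gm1 S) a.

Definition is_qstruct (S : qdata) : Prop :=
  (forall a b c : G S, gmul S a (gmul S b c) = gmul S (gmul S a b) c) /\
  (forall a : G S, gmul S (gone S) a = a) /\
  (forall a : G S, gmul S a (gone S) = a) /\
  (forall a : G S, gmul S a a = gone S) /\
  (forall x : Q S, exists a b, qq S a b = x) /\
  (forall a, qq S a (gneg S a) = qzero S) /\
  (forall a b, qq S a b = qq S b a) /\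
  (forall a b c, qq S a b = qq S a c <-> qq S a (gmul S b c) = qzero S) /\
  (forall a b c d, qq S a b = qq S c d <->
              exists x, qq S a b = qq S a x /\ qq S a x = qq S c x
                        /\ qq S c x = qq S c d).

Definition qprod (S1 S2 : qdata) : qdata :=
  {| G := (G S1 * G S2)%type;
     gmul := fun u v => (gmul S1 (fst u) (fst v), gmul S2 (snd u) (snd v));
     gone := (gone S1, gone S2);
     gm1 := (gm1 S1, gm1 S2);
     Q := (Q S1 * Q S2)%type;
     qzero := (qzero S1, qzero S2);
     qq := fun u v => (qq S1 (fst u) (fst v), qq S2 (snd u) (snd v)) |}.

(** Group extension S[x]: the cyclic group {1, x} is encoded by bool
    (false = 1, true = x); an element a x^alpha of G x {1,x} is (a, alpha). *)
Definition gpow (S : qdata) (a : G S) (beta : bool) : G S :=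
  if beta then a else gone S.

Definition qx_fun (S : qdata) (u v : G S * bool) : Q S * G S :=
  let (a, al) := u in let (b, be) := v in
  (qq S a b,
   gmul S (if al && be then gm1 S else gone S) (gmul S (gpow S a be) (gpow S b al))).

Definition Qx (S : qdata) : Type := { p : Q S * G S | exists u v, qx_fun S u v = p }.

Definition qx (S : qdata) (u v : G S * bool) : Qx S :=
  exist _ (qx_fun S u v) (ex_intro _ u (ex_intro _ v eq_refl)).

(* The zero quaternion (0,1) of S[x]; we take it as q_x(1,1) = (q(1,1),1),
   which equals (0,1) whenever S is quaternionic (Q3 gives q(a,1)=0).
   The zero plays no role in B(S[x]). *)
Definition qext (S : qdata) : qdata :=
  {| G := (G S * bool)%type;
     gmul := fun u v => (gmul S (fst u) (fst v), xorb (snd u) (snd v));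
     gone := (gone S, false);
     gm1 := (gm1 S, false);
     Q := Qx S;
     qzero := qx S (gone S, false) (gone S, false);
     qq := qx S |}.

(** The abstract 2-Brauer group B(S), presented as formal words in the
    generators Q (true = generator, false = its inverse) modulo the
    congruence generated by the abelian group laws and the relations
    q(a,b) * q(a,c) = q(a,bc). *)
Definition word (S : qdata) := list (bool * Q S).

Inductive beq (S : qdata) : word S -> word S -> Prop :=
| beq_refl : forall w, beq w w
| beq_sym : forall u v, beq u v -> beq v u
| beq_trans : forall u v w, beq u v -> beq v w -> beq u w
| beq_app : forall u u' v v', beq u u' -> beq v v' -> beq (u ++ v) (u' ++ v')
| beq_comm : forall x y, beq [x; y] [y; x]
| beq_inv : forall x, beq [(true, x); (false, x)] []
| beq_rel : forall a b c,
    beq [(true, qq S a b); (true, qq S a c)] [(true, qq S a (gmul S b c))].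

Definition setoid_iso {T1 T2 : Type}
  (R1 : T1 -> T1 -> Prop) (op1 : T1 -> T1 -> T1)
  (R2 : T2 -> T2 -> Prop) (op2 : T2 -> T2 -> T2) : Prop :=
  exists f : T1 -> T2,
    (forall u v, R1 u v -> R2 (f u) (f v)) /\
    (forall u v, R2 (f u) (f v) -> R1 u v) /\
    (forall y, exists u, R2 (f u) y) /\
    (forall u v, R2 (f (op1 u v)) (op2 (f u) (f v))).

Arguments beq : clear implicits.
Arguments beq {S}.
Definition B_R (S : qdata) : word S -> word S -> Prop := @beq S.
Definition B_op (S : qdata) : word S -> word S -> word S := @app _.

Definition BB_R (S1 S2 : qdata) (u v : word S1 * word S2) : Prop :=
  beq (fst u) (fst v) /\ beq (snd u) (snd v).
Definition BB_op (S1 S2 : qdata) (u v : word S1 * word S2) : word S1 * word S2 :=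
  (fst u ++ fst v, snd u ++ snd v).

Definition BG_R (S : qdata) (u v : word S * G S) : Prop :=
  beq (fst u) (fst v) /\ snd u = snd v.
Definition BG_op (S : qdata) (u v : word S * G S) : word S * G S :=
  (fst u ++ fst v, gmul S (snd u) (snd v)).
Arguments B_R : clear implicits.
Arguments B_op : clear implicits.
Arguments BB_R : clear implicits.
Arguments BB_op : clear implicits.
Arguments BG_R : clear implicits.
Arguments BG_op : clear implicits.

(* Main.v *)
Require Import Defs.
From Stdlib Require Import List Bool Setoid Morphisms ProofIrrelevance.
Import ListNotations.

Add Parametric Relation (S:qdata) : (word S) (@beq S)
  reflexivity proved by (@beq_refl S) symmetry proved by (@beq_sym S)
  transitivity proved by (@beq_trans S) as beq_setoid.

Add Parametric Morphism (S:qdata) : (@app (bool * Q S))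
  with signature (@beq S) ==> (@beq S) ==> (@beq S) as app_mor.
Proof. intros; apply beq_app; auto. Qed.

Section Tk.
Variable S : qdata.

Lemma app_cons1 (e : bool * Q S) (w : word S) : e :: w = [e] ++ w.
Proof. reflexivity. Qed.

Lemma comm1 (e : bool * Q S) (v : word S) : beq ([e] ++ v) (v ++ [e]).
Proof.
  induction v as [|x v IH]; simpl. reflexivity.
  transitivity ([x] ++ ([e] ++ v)).
  - change (beq ([e;x] ++ v) ([x;e] ++ v)). apply beq_app. apply beq_comm. reflexivity.
  - rewrite IH. reflexivity.
Qed.

Lemma comm_app (u v : word S) : beq (u ++ v) (v ++ u).
Proof.
  induction u as [|e u IH]; simpl. rewrite app_nil_r. reflexivity.
  rewrite app_cons1, IH, app_assoc, comm1, <- app_assoc. reflexivity.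
Qed.

Definition neg (w : word S) : word S := map (fun e => (negb (fst e), snd e)) w.

Lemma inv1 (s : bool) (x : Q S) : beq [(s,x);(negb s,x)] [].
Proof.
  destruct s; simpl. apply beq_inv.
  rewrite (beq_comm S). apply beq_inv.
Qed.

Lemma neg_cancel (w : word S) : beq (w ++ neg w) [].
Proof.
  induction w as [|[s x] w IH]; simpl. reflexivity.
  transitivity ([(s,x);(negb s,x)] ++ (w ++ neg w)).
  - change ((s,x)::w ++ (negb s,x)::neg w) with ([(s,x)] ++ (w ++ ([(negb s,x)] ++ neg w))).
    rewrite (app_assoc w), (comm_app w), <- app_assoc. reflexivity.
  - rewrite IH, inv1. reflexivity.
Qed.

Lemma neg_app u v : neg (u ++ v) = neg u ++ neg v.
Proof. unfold neg; apply map_app. Qed.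

Lemma beq_neg (u v : word S) : beq u v -> beq (neg u) (neg v).
Proof.
  intro H.
  transitivity (neg u ++ (v ++ neg v)). rewrite neg_cancel, app_nil_r. reflexivity.
  transitivity (neg u ++ (u ++ neg v)).
  apply beq_app; [reflexivity | apply beq_app; [symmetry; exact H|reflexivity]].
  rewrite app_assoc, comm_app with (u := neg u), neg_cancel. reflexivity.
Qed.

Lemma idem_nil (x : bool * Q S) : beq [x;x] [x] -> beq [x] [].
Proof.
  intro H. destruct x as [s x].
  transitivity ([(s,x)] ++ [(s,x);(negb s,x)]).
  rewrite inv1. reflexivity.
  change ([(s,x)] ++ [(s,x);(negb s,x)]) with ([(s,x);(s,x)] ++ [(negb s,x)]).
  rewrite H. apply inv1.
Qed.

Lemma sq_nil_flip (x : Q S) : beq [(true,x);(true,x)] [] -> beq [(false,x)] [(true,x)].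
Proof.
  intro H.
  transitivity ([(false,x)] ++ [(true,x);(true,x)]). rewrite H. reflexivity.
  change ([(false,x)] ++ [(true,x);(true,x)]) with ([(false,x);(true,x)] ++ [(true,x)]).
  rewrite (inv1 false x). reflexivity.
Qed.

End Tk.
Arguments neg {S} w.
Arguments beq_neg {S u v} _.
Arguments comm_app {S} u v.
Arguments comm1 {S} e v.
Arguments inv1 {S} s x.
Arguments neg_cancel {S} w.
Arguments idem_nil {S x} _.
Arguments sq_nil_flip {S x} _.
Arguments app_cons1 {S} e w.
Lemma rearr {S : qdata} (e1 e2 : bool * Q S) (u v : word S) :
  beq (e1 :: (u ++ e2 :: v)) ([e1;e2] ++ (u ++ v)).
Proof.
  change (e1 :: (u ++ e2 :: v)) with ([e1] ++ (u ++ ([e2] ++ v))).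
  rewrite (app_assoc u), (comm_app u [e2]), <- app_assoc. reflexivity.
Qed.
Add Parametric Morphism (S:qdata) (e : bool * Q S) : (@cons (bool * Q S) e)
  with signature (@beq S) ==> (@beq S) as cons_mor.
Proof. intros u v H. change (beq ([e] ++ u) ([e] ++ v)). apply beq_app; [reflexivity|exact H]. Qed.

Section Gr.
Variable S : qdata.
Variable HS : is_qstruct S.
Notation "a * b" := (gmul S a b).
Notation one := (gone S).

Ltac dh := destruct HS as [h1 [h2 [h3 [h4 [h5 [h6 [h7 [h8 h9]]]]]]]].
Lemma g_assoc a b c : a * (b * c) = (a * b) * c.
Proof. dh; auto. Qed.
Lemma g_idl a : one * a = a.
Proof. dh; auto. Qed.
Lemma g_idr a : a * one = a.
Proof. dh; auto. Qed.
Lemma g_inv a : a * a = one.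
Proof. dh; auto. Qed.
Lemma g_surj x : exists a b, qq S a b = x.
Proof. dh; auto. Qed.
Lemma g_q2 a b : qq S a b = qq S b a.
Proof. dh; auto. Qed.
Lemma g_comm a b : a * b = b * a.
Proof.
  rewrite <- (g_idr (a*b)), <- (g_inv (b*a)).
  rewrite !g_assoc. rewrite <- (g_assoc a b b), g_inv, g_idr, g_inv, g_idl. reflexivity.
Qed.
Lemma g_swap a b c : a * (b * c) = b * (a * c).
Proof. rewrite !g_assoc, (g_comm a b). reflexivity. Qed.
Lemma qa1 a : qq S a one = qzero S.
Proof.
  destruct HS as [_ [_ [_ [_ [_ [_ [_ [q3 _]]]]]]]].
  rewrite <- (g_inv one) at 1. apply q3. reflexivity.
Qed.
Lemma q1a a : qq S one a = qzero S.
Proof. rewrite g_q2; apply qa1. Qed.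
End Gr.

Lemma zero_nil (S : qdata) (HS : is_qstruct S) s : beq [(s, qzero S)] [].
Proof.
  assert (Ht : beq [(true, qzero S)] []).
  { apply idem_nil. pose proof (beq_rel S (gone S) (gone S) (gone S)) as H.
    rewrite (g_idl _ HS), (qa1 _ HS) in H. exact H. }
  destruct s; [exact Ht|].
  change [(false, qzero S)] with (neg [(true, qzero S)]).
  change (@nil (bool * Q S)) with (neg (S:=S) []). apply beq_neg. exact Ht.
Qed.

Lemma zero_words (S : qdata) (HS : is_qstruct S) (A : Type) (w : list (bool * A)) :
  beq (map (fun e : bool * A => (fst e, qzero S)) w) [].
Proof.
  induction w as [|e w IH]; simpl. reflexivity.
  rewrite app_cons1, IH, zero_nil; auto. reflexivity.
Qed.

Section PartA.
Variables S S' : qdata.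
Variable HS : is_qstruct S.
Variable HS' : is_qstruct S'.
Notation P := (qprod S S').

Definition fa1 (w : word P) : word S := map (fun e => (fst e, fst (snd e))) w.
Definition fa2 (w : word P) : word S' := map (fun e => (fst e, snd (snd e))) w.
Definition fa (w : word P) : word S * word S' := (fa1 w, fa2 w).
Definition ha1 (w : word S) : word P := map (fun e => (fst e, ((snd e, qzero S') : Q P))) w.
Definition ha2 (w : word S') : word P := map (fun e => (fst e, ((qzero S, snd e) : Q P))) w.
Definition ga (u : word S * word S') : word P := ha1 (fst u) ++ ha2 (snd u).

Lemma fa_ok u v : beq u v -> BB_R S S' (fa u) (fa v).
Proof.
  unfold BB_R, fa, fa1, fa2; simpl.
  induction 1; simpl.
  - split; reflexivity.
  - destruct IHbeq; split; symmetry; auto.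
  - destruct IHbeq1, IHbeq2; split; etransitivity; eauto.
  - rewrite !map_app. destruct IHbeq1, IHbeq2; split; apply beq_app; auto.
  - split; apply beq_comm.
  - split; apply beq_inv.
  - split; apply beq_rel.
Qed.

Lemma ha1_ok u v : beq u v -> beq (ha1 u) (ha1 v).
Proof.
  unfold ha1. induction 1; simpl.
  - reflexivity.
  - symmetry; auto.
  - etransitivity; eauto.
  - rewrite !map_app. apply beq_app; auto.
  - apply beq_comm.
  - apply beq_inv.
  - pose proof (beq_rel P (a, gone S') (b, gone S') (c, gone S')) as H.
    simpl in H. rewrite (g_idl _ HS'), (qa1 _ HS') in H. exact H.
Qed.

Lemma ha2_ok u v : beq u v -> beq (ha2 u) (ha2 v).
Proof.
  unfold ha2. induction 1; simpl.
  - reflexivity.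
  - symmetry; auto.
  - etransitivity; eauto.
  - rewrite !map_app. apply beq_app; auto.
  - apply beq_comm.
  - apply beq_inv.
  - pose proof (beq_rel P (gone S, a) (gone S, b) (gone S, c)) as H.
    simpl in H. rewrite (g_idl _ HS), (qa1 _ HS) in H. exact H.
Qed.

Lemma split_gen s (x : Q S) (y : Q S') :
  beq [(s, ((x, qzero S') : Q P)); (s, ((qzero S, y) : Q P))] [(s, ((x, y) : Q P))].
Proof.
  assert (Ht : beq [(true, ((x, qzero S') : Q P)); (true, ((qzero S, y) : Q P))]
                   [(true, ((x, y) : Q P))]).
  { destruct (g_surj _ HS x) as [a [b Hx]]. destruct (g_surj _ HS' y) as [c [d Hy]].
    subst x y.
    pose proof (beq_rel P (a, c) (b, gone S') (gone S, d)) as H.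
    simpl in H. rewrite (g_idl _ HS'), (g_idr _ HS), (qa1 _ HS), (qa1 _ HS') in H. exact H. }
  destruct s; [exact Ht|].
  apply (beq_neg Ht).
Qed.

Lemma gfa w : beq (ga (fa w)) w.
Proof.
  induction w as [|[s [x y]] w IH]. reflexivity.
  unfold ga, fa in *. simpl fst in *; simpl snd in *.
  change (beq ((s, ((x, qzero S') : Q P)) :: ha1 (fa1 w) ++ (s, ((qzero S, y) : Q P)) :: ha2 (fa2 w))
    ((s, ((x,y) : Q P)) :: w)).
  rewrite rearr, split_gen, IH. reflexivity.
Qed.

Lemma fa1_ha1 w : fa1 (ha1 w) = w.
Proof. unfold fa1, ha1; induction w as [|[s x] w IH]; simpl; [reflexivity| f_equal; exact IH]. Qed.
Lemma fa2_ha2 w : fa2 (ha2 w) = w.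
Proof. unfold fa2, ha2; induction w as [|[s x] w IH]; simpl; [reflexivity| f_equal; exact IH]. Qed.
Lemma fa1_ha2 w : fa1 (ha2 w) = map (fun e => (fst e, qzero S)) w.
Proof. unfold fa1, ha2; rewrite map_map. reflexivity. Qed.
Lemma fa2_ha1 w : fa2 (ha1 w) = map (fun e => (fst e, qzero S')) w.
Proof. unfold fa2, ha1; rewrite map_map. reflexivity. Qed.

Lemma partA : setoid_iso (B_R P) (B_op P) (BB_R S S') (BB_op S S').
Proof.
  exists fa. split; [|split; [|split]].
  - exact fa_ok.
  - intros u v [H1 H2]. unfold B_R.
    rewrite <- (gfa u), <- (gfa v). unfold ga. apply beq_app.
    apply ha1_ok; exact H1. apply ha2_ok; exact H2.
  - intros [w1 w2]. exists (ga (w1, w2)). unfold BB_R, fa, ga; cbn [fst snd].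
    assert (E1 : fa1 (ha1 w1 ++ ha2 w2) = fa1 (ha1 w1) ++ fa1 (ha2 w2)) by (unfold fa1; apply map_app).
    assert (E2 : fa2 (ha1 w1 ++ ha2 w2) = fa2 (ha1 w1) ++ fa2 (ha2 w2)) by (unfold fa2; apply map_app).
    rewrite E1, E2.
    rewrite fa1_ha1, fa2_ha2, fa1_ha2, fa2_ha1, !zero_words by assumption.
    rewrite app_nil_r. split; reflexivity.
  - intros u v. unfold BB_R, fa, fa1, fa2, B_op, BB_op; simpl. rewrite !map_app. split; reflexivity.
Qed.

End PartA.

Section PartB.
Variable S : qdata.
Variable HS : is_qstruct S.
Notation E := (qext S).
Notation "a * b" := (gmul S a b).
Notation one := (gone S).

Lemma M_ex x : exists u v, qx_fun S u v = (x, one).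
Proof.
  destruct (g_surj _ HS x) as [a [b H]]. exists (a,false), (b,false). simpl.
  rewrite H, !(g_idl _ HS). reflexivity.
Qed.
Lemma Z_ex k : exists u v, qx_fun S u v = (qzero S, k).
Proof.
  exists (k,false), (one,true). simpl.
  rewrite (qa1 _ HS), (g_idl _ HS), (g_idr _ HS). reflexivity.
Qed.
Definition Mq x : Qx S := exist _ (x, one) (M_ex x).
Definition Zq k : Qx S := exist _ (qzero S, k) (Z_ex k).

Lemma Qx_eq (p p' : Qx S) : proj1_sig p = proj1_sig p' -> p = p'.
Proof.
  destruct p as [x Hx], p' as [y Hy]; simpl; intro; subst. f_equal; apply proof_irrelevance.
Qed.

Lemma rel' u v w (p1 p2 p3 : Qx S) :
  qx_fun S u v = proj1_sig p1 -> qx_fun S u w = proj1_sig p2 ->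
  qx_fun S u (gmul S (fst v) (fst w), xorb (snd v) (snd w)) = proj1_sig p3 ->
  beq (S:=E) [(true,p1);(true,p2)] [(true,p3)].
Proof.
  intros H1 H2 H3.
  pose proof (beq_rel E u v w) as H. simpl in H.
  replace (qx S u v) with p1 in H by (apply Qx_eq; simpl; auto).
  replace (qx S u w) with p2 in H by (apply Qx_eq; simpl; auto).
  replace (qx S u _) with p3 in H by (apply Qx_eq; simpl; auto).
  exact H.
Qed.

Ltac gs := simpl; rewrite ?(qa1 _ HS), ?(q1a _ HS), ?(g_idl _ HS), ?(g_idr _ HS).

Lemma Zmul k l : beq (S:=E) [(true, Zq k); (true, Zq l)] [(true, Zq (k * l))].
Proof. apply (rel' (one,true) (k,false) (l,false)); gs; reflexivity. Qed.

Lemma Z1 : beq (S:=E) [(true, Zq one)] [].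
Proof. apply (@idem_nil E (true, Zq one)). pose proof (Zmul one one) as H. rewrite (g_idl _ HS) in H. exact H. Qed.

Lemma Zsq k : beq (S:=E) [(true, Zq k); (true, Zq k)] [].
Proof. rewrite Zmul, (g_inv _ HS). apply Z1. Qed.

Lemma Zs s k : beq (S:=E) [(s, Zq k)] [(true, Zq k)].
Proof. destruct s. reflexivity. apply (@sq_nil_flip E (Zq k)), Zsq. Qed.

Lemma Cff a b : beq (S:=E) [(true, qx S (a,false) (b,false))] [(true, Mq (qq S a b)); (true, Zq one)].
Proof.
  replace (qx S (a,false) (b,false)) with (Mq (qq S a b)) by (apply Qx_eq; gs; reflexivity).
  change [(true, Mq (qq S a b)); (true, Zq one)] with (([(true, Mq (qq S a b))] : word E) ++ [(true, Zq one)]).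
  rewrite Z1, app_nil_r. reflexivity.
Qed.

Lemma Cft a b : beq (S:=E) [(true, qx S (a,false) (b,true))] [(true, Mq (qq S a b)); (true, Zq a)].
Proof.
  symmetry. apply (rel' (a,false) (b,false) (one,true)); gs; reflexivity.
Qed.

Lemma Ctf a b : beq (S:=E) [(true, qx S (a,true) (b,false))] [(true, Mq (qq S a b)); (true, Zq b)].
Proof.
  symmetry. apply (rel' (b,false) (a,false) (one,true)); gs; rewrite ?(g_q2 _ HS a b); reflexivity.
Qed.

Lemma Ctt a b : beq (S:=E) [(true, qx S (a,true) (b,true))]
   [(true, Mq (qq S a b)); (true, Zq (gm1 S * (a * b)))].
Proof.
  assert (H : beq (S:=E) [(true, qx S (a,true) (b,false)); (true, Zq (gm1 S * a))]
                        [(true, qx S (a,true) (b,true))]).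
  { apply (rel' (a,true) (b,false) (one,true)); gs; reflexivity. }
  rewrite <- H.
  change [(true, qx S (a, true) (b, false)); (true, Zq (gm1 S * a))]
    with (([(true, qx S (a, true) (b, false))] : word E) ++ [(true, Zq (gm1 S * a))]).
  rewrite Ctf.
  change (([(true, Mq (qq S a b)); (true, Zq b)] : word E) ++ [(true, Zq (gm1 S * a))])
    with (([(true, Mq (qq S a b))] : word E) ++ [(true, Zq b); (true, Zq (gm1 S * a))]).
  rewrite Zmul. rewrite (g_swap _ HS), (g_comm _ HS b a). reflexivity.
Qed.

Lemma KEYcase u v : beq (S:=E) [(true, qx S u v)]
  [(true, Mq (fst (qx_fun S u v))); (true, Zq (snd (qx_fun S u v)))].
Proof.
  destruct u as [a [|]], v as [b [|]]; simpl.
  - apply Ctt.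
  - rewrite !(g_idl _ HS). apply Ctf.
  - rewrite (g_idl _ HS), (g_idr _ HS). apply Cft.
  - rewrite !(g_idl _ HS). apply Cff.
Qed.

Lemma KEY s (p : Qx S) : beq (S:=E) [(s, p)]
  [(s, Mq (fst (proj1_sig p))); (true, Zq (snd (proj1_sig p)))].
Proof.
  destruct (proj2_sig p) as [u [v Hp]].
  rewrite (Qx_eq p (qx S u v)) by (simpl; auto). simpl proj1_sig.
  destruct s. apply KEYcase.
  pose proof (beq_neg (KEYcase u v)) as H. simpl in H.
  rewrite H. 
  change [(false, Mq (fst (qx_fun S u v))); (false, Zq (snd (qx_fun S u v)))]
    with (([(false, Mq (fst (qx_fun S u v)))] : word E) ++ [(false, Zq (snd (qx_fun S u v)))]).
  rewrite Zs. reflexivity.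
Qed.

Definition F1 (w : word E) : word S := map (fun e : bool * Q E => (fst e, fst (proj1_sig (snd e : Qx S)))) w.
Definition F2 (w : word E) : G S := fold_right (fun (e : bool * Q E) acc => snd (proj1_sig (snd e : Qx S)) * acc) one w.
Definition FB (w : word E) : word S * G S := (F1 w, F2 w).
Definition hB (w : word S) : word E := map (fun e => (fst e, (Mq (snd e) : Q E))) w.
Definition GB (u : word S * G S) : word E := hB (fst u) ++ [(true, (Zq (snd u) : Q E))].

Lemma F2_app u v : F2 (u ++ v) = F2 u * F2 v.
Proof.
  induction u as [|e u IH]. simpl. rewrite (g_idl _ HS); reflexivity.
  change (F2 ((e::u) ++ v)) with (snd (proj1_sig (snd e : Qx S)) * F2 (u ++ v)).
  change (F2 (e::u)) with (snd (proj1_sig (snd e : Qx S)) * F2 u).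
  rewrite IH, (g_assoc _ HS). reflexivity.
Qed.

Lemma F_ok u v : beq u v -> BG_R S (FB u) (FB v).
Proof.
  unfold BG_R, FB; cbn [fst snd].
  induction 1.
  - split; reflexivity.
  - destruct IHbeq; split; symmetry; auto.
  - destruct IHbeq1, IHbeq2; split; etransitivity; eauto.
  - unfold F1 in *; rewrite !map_app, !F2_app. destruct IHbeq1, IHbeq2; split.
    apply beq_app; auto. congruence.
  - split. apply beq_comm. unfold F2; simpl. apply (g_swap _ HS).
  - split. apply beq_inv. unfold F2; simpl. rewrite (g_idr _ HS). apply (g_inv _ HS).
  - destruct a as [a al], b as [b be], c as [c ga]. split.
    unfold F1; simpl. apply beq_rel. unfold F2; simpl.
    destruct al, be, ga; simpl;
      rewrite ?(g_idl _ HS), ?(g_idr _ HS); try reflexivity.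
    + rewrite <- (g_assoc _ HS), (g_swap _ HS (a*b) (gm1 S) (a*c)), (g_assoc _ HS), (g_inv _ HS), (g_idl _ HS).
      rewrite <- (g_assoc _ HS), (g_swap _ HS b a c), (g_assoc _ HS), (g_inv _ HS), (g_idl _ HS). reflexivity.
    + rewrite <- !(g_assoc _ HS). reflexivity.
    + rewrite (g_swap _ HS b (gm1 S)), (g_swap _ HS b a). reflexivity.
    + apply (g_inv _ HS).
Qed.

Lemma hB_ok u v : beq u v -> beq (hB u) (hB v).
Proof.
  unfold hB. induction 1; simpl.
  - reflexivity.
  - symmetry; auto.
  - etransitivity; eauto.
  - rewrite !map_app. apply beq_app; auto.
  - apply beq_comm.
  - apply beq_inv.
  - apply (rel' (a,false) (b,false) (c,false)); gs; reflexivity.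
Qed.

Lemma GF w : beq (GB (FB w)) w.
Proof.
  induction w as [|[s p] w IH].
  - unfold GB, FB; simpl. apply Z1.
  - unfold GB, FB in *; cbn [fst snd] in *.
    change (F2 ((s,p)::w)) with (snd (proj1_sig (p : Qx S)) * F2 w).
    change (hB (F1 ((s,p)::w))) with ((s, (Mq (fst (proj1_sig (p : Qx S))) : Q E)) :: hB (F1 w)).
    rewrite <- app_comm_cons.
    change [(true, (Zq (snd (proj1_sig (p : Qx S)) * F2 w) : Q E))]
       with (([(true, (Zq (snd (proj1_sig (p : Qx S)) * F2 w) : Q E))] : word E)).
    rewrite <- Zmul.
    change ([(true, Zq (snd (proj1_sig p))); (true, Zq (F2 w))] : word E)
      with (((true, Zq (snd (proj1_sig p))) :: [(true, Zq (F2 w))]) : word E).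
    rewrite rearr, IH, <- KEY. reflexivity.
Qed.

Lemma hB_F1 w : F1 (hB w) = w.
Proof. induction w as [|[s x] w IH]; simpl; [reflexivity|]. unfold F1 in *; simpl; f_equal; exact IH. Qed.
Lemma hB_F2 w : F2 (hB w) = one.
Proof.
  induction w as [|[s x] w IH]; [reflexivity|].
  change (one * F2 (hB w) = one). rewrite IH; apply (g_idl _ HS).
Qed.

Lemma partB : setoid_iso (B_R E) (B_op E) (BG_R S) (BG_op S).
Proof.
  exists FB. split; [|split; [|split]].
  - exact F_ok.
  - intros u v [H1 H2]. unfold B_R.
    rewrite <- (GF u), <- (GF v). unfold GB. rewrite H2. apply beq_app.
    apply hB_ok; exact H1. reflexivity.
  - intros [w h]. exists (GB (w, h)). unfold BG_R, FB, GB; cbn [fst snd].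
    split.
    + unfold F1 at 1. rewrite map_app. fold (F1 (hB w)). rewrite hB_F1. simpl.
      change [(true, qzero S)] with ([(true, qzero S)] : word S).
      rewrite (zero_nil _ HS), app_nil_r. reflexivity.
    + rewrite F2_app, hB_F2. simpl. rewrite (g_idl _ HS), (g_idr _ HS). reflexivity.
  - intros u v. unfold BG_R, FB, B_op, BG_op; cbn [fst snd]. unfold F1 at 1. rewrite map_app, F2_app.
    split; reflexivity.
Qed.

End PartB.

Theorem proposition4 (S S' : qdata) :
  is_qstruct S -> is_qstruct S' ->
  setoid_iso (B_R (qprod S S')) (B_op (qprod S S')) (BB_R S S') (BB_op S S') /\
  setoid_iso (B_R (qext S)) (B_op (qext S)) (BG_R S) (BG_op S).
Proof.
  intros HS HS'. split.
  - apply partA; assumption.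
  - apply partB; assumption.
Qed.
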